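(* Let $n,m,V$ be positive integers, let $\lambda>0$ and $\beta_\lambda>0$. For each $v\in\{1,\dots,V\}$ let $\mathbf{Z}_v\in\Delta^n_m$ and let $\mathbf{T}_v\in\mathbb{R}^{m\times m}$ satisfy $\mathbf{T}_v^\top\mathbf{T}_v=\mathbf{I}_m$. Let $\mathbf{H}\in\mathbb{R}^{n\times m}$ be a fixed matrix with nonnegative entries. For $\boldsymbol{\alpha}=(\alpha_1,\dots,\alpha_V)^\top\in\mathbb{R}^V$ define $$h(\boldsymbol{\alpha})=\max_{\mathbf{P}\in\Delta^n_m}\ \lambda\sum_{v=1}^V\alpha_v^2\,\mathrm{Tr}\big(\mathbf{P}^\top\mathbf{Z}_v\mathbf{T}_v\big)-\beta_\lambda\|\mathbf{P}\|_F^2-\sum_{i=1}^n\sum_{j=1}^m H_{ij}P_{ij}.$$ Then $h$ is differentiable at every $\boldsymbol{\alpha}$ with $\boldsymbol{\alpha}^\top\in\Delta^1_V$, and for each $v$, $$\frac{\partial h(\boldsymbol{\alpha})}{\partial\alpha_v}=2\lambda\alpha_v\,\mathrm{Tr}\big(\mathbf{P}^{\star\top}\mathbf{Z}_v\mathbf{T}_v\big),$$ where $\mathbf{P}^\star$ is the (unique) maximizer of the inner maximization problem at $\boldsymbol{\alpha}$.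
   Context: For positive integers $a,b$, $\Delta^a_b=\{\zeta\in\mathbb{R}^{a\times b}:\zeta\mathbf{1}_b=\mathbf{1}_a,\ \zeta\ge 0\}$ denotes the set of $a\times b$ nonnegative matrices whose rows each sum to $1$; in particular $\boldsymbol{\alpha}^\top\in\Delta^1_V$ means $\boldsymbol{\alpha}$ lies in the probability simplex of $\mathbb{R}^V$. $\|\cdot\|_F$ is the Frobenius norm. In the paper's setting, $H_{ij}=\|\mathbf{F}_{i\cdot}/\sqrt{d_i}-\mathbf{Q}_{j\cdot}/\sqrt{d_{n+j}}\|_2^2$ for soft label matrices $\mathbf{F}\in\mathbb{R}^{n\times c}$, $\mathbf{Q}\in\mathbb{R}^{m\times c}$ and graph degrees $d_k$, and this matrix is held fixed in the inner problem. *)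

(* Defs.v *)
From HB Require Import structures.
From mathcomp Require Import all_boot all_order all_algebra.
From mathcomp Require Import all_classical all_reals all_analysis.
Set Implicit Arguments. Unset Strict Implicit. Unset Printing Implicit Defensive.
Import Order.TTheory GRing.Theory Num.Theory.
Import numFieldNormedType.Exports.
Local Open Scope ring_scope.

Definition rowstoch (R : realType) (a b : nat) (Z : 'M[R]_(a, b)) : Prop :=
  (forall i j, 0 <= Z i j) /\ (forall i, \sum_(j < b) Z i j = 1).

Definition frob2 (R : realType) (a b : nat) (P : 'M[R]_(a, b)) : R :=
  \sum_(i < a) \sum_(j < b) P i j ^+ 2.

Definition inner_obj (R : realType) (n m V : nat) (lam beta : R)
  (Z : 'I_V -> 'M[R]_(n, m)) (T : 'I_V -> 'M[R]_m) (H : 'M[R]_(n, m))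
  (alpha : 'cV[R]_V) (P : 'M[R]_(n, m)) : R :=
  lam * (\sum_(v < V) alpha v 0 ^+ 2 * \tr (P^T *m Z v *m T v))
  - beta * frob2 P
  - \sum_(i < n) \sum_(j < m) H i j * P i j.

(* h(alpha) = max over P in Delta^n_m of the inner objective (written as sup;
   the max is attained since Delta^n_m is compact and the objective continuous) *)
Definition hfun (R : realType) (n m V : nat) (lam beta : R)
  (Z : 'I_V -> 'M[R]_(n, m)) (T : 'I_V -> 'M[R]_m) (H : 'M[R]_(n, m))
  (alpha : 'cV[R]_V) : R :=
  sup [set inner_obj lam beta Z T H alpha P | P in [set P | rowstoch P]]%classic.

Definition is_maximizer (R : realType) (n m V : nat) (lam beta : R)
  (Z : 'I_V -> 'M[R]_(n, m)) (T : 'I_V -> 'M[R]_m) (H : 'M[R]_(n, m))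
  (alpha : 'cV[R]_V) (P : 'M[R]_(n, m)) : Prop :=
  rowstoch P /\ forall Q, rowstoch Q ->
    inner_obj lam beta Z T H alpha Q <= inner_obj lam beta Z T H alpha P.

(* Main.v *)
Require Import Defs.
From HB Require Import structures.
From mathcomp Require Import all_boot all_order all_algebra.
From mathcomp Require Import all_classical all_reals all_analysis.
From mathcomp Require Import ring lra.
Set Implicit Arguments. Unset Strict Implicit. Unset Printing Implicit Defensive.
Import Order.TTheory GRing.Theory Num.Theory.
Import numFieldNormedType.Exports.
Local Open Scope ring_scope.

Section Alg.
Variables (R : realType) (n m : nat) (beta : R).

Definition Fo (K P : 'M[R]_(n, m)) : R :=
  \sum_(i < n) \sum_(j < m) (K i j * P i j - beta * P i j ^+ 2).
Definition dotm (A B : 'M[R]_(n, m)) : R := \sum_(i < n) \sum_(j < m) A i j * B i j.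
Definition fr (A : 'M[R]_(n, m)) : R := \sum_(i < n) \sum_(j < m) A i j ^+ 2.

Lemma sum2D (f g : 'I_n -> 'I_m -> R) :
  \sum_i \sum_j f i j + \sum_i \sum_j g i j = \sum_i \sum_j (f i j + g i j).
Proof. rewrite -big_split; apply: eq_bigr => i _; by rewrite -big_split. Qed.
Lemma sum2M c (f : 'I_n -> 'I_m -> R) :
  c * \sum_i \sum_j f i j = \sum_i \sum_j (c * f i j).
Proof. rewrite mulr_sumr; apply: eq_bigr => i _; by rewrite mulr_sumr. Qed.
Lemma sum2N (f : 'I_n -> 'I_m -> R) :
  - \sum_i \sum_j f i j = \sum_i \sum_j (- f i j).
Proof. rewrite -sumrN; apply: eq_bigr => i _; by rewrite -sumrN. Qed.
Lemma sum2_ext (f g : 'I_n -> 'I_m -> R) : (forall i j, f i j = g i j) ->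
  \sum_i \sum_j f i j = \sum_i \sum_j g i j.
Proof. move=> e; apply: eq_bigr => i _; apply: eq_bigr => j _; exact: e. Qed.
Lemma sum2_le (f g : 'I_n -> 'I_m -> R) : (forall i j, f i j <= g i j) ->
  \sum_i \sum_j f i j <= \sum_i \sum_j g i j.
Proof. move=> e; apply: ler_sum => i _; apply: ler_sum => j _; exact: e. Qed.

Lemma Fo_shift K K0 P : Fo K P = Fo K0 P + dotm (K - K0) P.
Proof. rewrite /Fo /dotm sum2D; apply: sum2_ext => i j; rewrite !mxE; ring. Qed.

Lemma rowstoch_conv (P Q : 'M[R]_(n,m)) (t : R) : rowstoch P -> rowstoch Q -> 0 <= t <= 1 ->
  rowstoch (P + t *: (Q - P)).
Proof.
move=> [P0 P1] [Q0 Q1] /andP[t0 t1]; split.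
  move=> i j; rewrite !mxE.
  have -> : P i j + t * (Q i j - P i j) = (1 - t) * P i j + t * Q i j by ring.
  by apply: addr_ge0; apply: mulr_ge0 => //; rewrite subr_ge0.
move=> i; under eq_bigr do rewrite !mxE.
rewrite big_split /= -mulr_sumr sumrB P1 Q1; ring.
Qed.

Lemma qgrowth (hb : 0 < beta) (K P0 : 'M[R]_(n,m)) : rowstoch P0 -> (forall Q, rowstoch Q -> Fo K Q <= Fo K P0) ->
  forall Q, rowstoch Q -> Fo K Q <= Fo K P0 - beta * fr (Q - P0).
Proof.
move=> HP0 Hmax Q HQ.
set a := \sum_i \sum_j ((K i j - 2 * beta * P0 i j) * (Q - P0) i j).
set b := beta * fr (Q - P0).
have Ht : forall t, Fo K (P0 + t *: (Q - P0)) = Fo K P0 + t * a - t ^+ 2 * b.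
  move=> t; rewrite /b /a /fr /Fo sum2M mulrA sum2M sum2D sum2N sum2D.
  apply: sum2_ext => i j; rewrite !mxE; ring.
have HQ' : Fo K Q = Fo K P0 + a - b.
  have := Ht 1; rewrite scale1r addrC subrK => ->; ring.
rewrite HQ'.
suff : a <= 0 by lra.
rewrite leNgt; apply/negP => a0.
have b0 : 0 <= b.
  rewrite /b /fr; apply: mulr_ge0; first exact: ltW.
  by apply: sumr_ge0 => i _; apply: sumr_ge0 => j _; apply: sqr_ge0.
pose t := a / (a + 2 * b).
have ab0 : 0 < a + 2 * b by lra.
have t0 : 0 <= t <= 1.
  apply/andP; split; first by rewrite /t divr_ge0 // ltW.
  by rewrite /t ler_pdivrMr // mul1r; lra.
have := Hmax _ (rowstoch_conv HP0 HQ t0); rewrite Ht => h.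
have tp : 0 < t by rewrite /t divr_gt0.
have h1 : 0 <= t * (t * b - a) by rewrite mulrBr mulrA -expr2; lra.
have h1' : a <= t * b by move: h1; rewrite pmulr_rge0 // subr_ge0.
have e : t * b * (a + 2 * b) = a * b by rewrite /t mulrAC divfK // gt_eqF.
have h2 : a * (a + 2 * b) <= t * b * (a + 2 * b) by rewrite ler_pM2r.
rewrite e in h2; nra.
Qed.

Lemma fr_ge0 (A : 'M[R]_(n,m)) : 0 <= fr A.
Proof. by apply: sumr_ge0 => i _; apply: sumr_ge0 => j _; apply: sqr_ge0. Qed.

Lemma fr_eq0 (A : 'M[R]_(n,m)) : fr A = 0 -> A = 0.
Proof.
move=> h; apply/matrixP => i j; rewrite mxE.
have /psumr_eq0P h1 := h.
have /psumr_eq0P h2 := h1 (fun k _ => sumr_ge0 _ (fun j _ => sqr_ge0 (A k j))) i isT.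
have := h2 (fun j _ => sqr_ge0 (A i j)) j isT.
by move/eqP; rewrite sqrf_eq0 => /eqP.
Qed.

Lemma max_unique (hb : 0 < beta) (K P0 P1 : 'M[R]_(n,m)) :
  rowstoch P0 -> (forall Q, rowstoch Q -> Fo K Q <= Fo K P0) ->
  rowstoch P1 -> (forall Q, rowstoch Q -> Fo K Q <= Fo K P1) -> P1 = P0.
Proof.
move=> H0 M0 H1 M1.
have := qgrowth hb H0 M0 H1; have := M1 _ H0; have := fr_ge0 (P1 - P0).
move=> g a b.
have : beta * fr (P1 - P0) <= 0 by lra.
rewrite pmulr_rle0 // => c.
have : fr (P1 - P0) = 0 by apply/eqP; rewrite eq_le c g.
by move/fr_eq0/eqP; rewrite subr_eq0 => /eqP.
Qed.

Lemma Fo_upper (hb : 0 < beta) (K0 K P0 : 'M[R]_(n,m)) : rowstoch P0 ->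
  (forall Q, rowstoch Q -> Fo K0 Q <= Fo K0 P0) ->
  forall Q, rowstoch Q ->
  Fo K Q <= Fo K0 P0 + dotm (K - K0) P0 + (4 * beta)^-1 * fr (K - K0).
Proof.
move=> HP0 Hmax Q HQ.
have := qgrowth hb HP0 Hmax HQ.
rewrite (Fo_shift K K0).
suff : dotm (K - K0) Q - beta * fr (Q - P0) <=
       dotm (K - K0) P0 + (4 * beta)^-1 * fr (K - K0) by lra.
rewrite /dotm /fr !sum2M sum2N !sum2D; apply: sum2_le => i j.
set D := (K - K0) i j; rewrite !mxE.
set x := Q i j - P0 i j.
have bn0 : beta != 0 by rewrite gt_eqF.
have -> : D * Q i j + - (beta * x ^+ 2) = D * P0 i j + (4 * beta)^-1 * D ^+ 2
   - (4 * beta)^-1 * (2 * beta * x - D) ^+ 2.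
  by rewrite /x; field.
rewrite gerBl; apply: mulr_ge0; last exact: sqr_ge0.
by rewrite invr_ge0 mulr_ge0 // ltW.
Qed.

End Alg.

Local Open Scope classical_set_scope.

Section Ex.
Variables (R : realType) (n m : nat).

Lemma closed_ge0 (f : 'rV[R]_(n * m) -> R) : continuous f -> closed [set v | 0 <= f v].
Proof.
move=> cf; have -> : [set v | 0 <= f v] = f @^-1` [set x | 0 <= x] by [].
by apply: preimage_closed; [move=> x _; exact: cf | exact: closed_ge].
Qed.

Lemma closed_eq1 (f : 'rV[R]_(n * m) -> R) : continuous f -> closed [set v | f v = 1].
Proof.
move=> cf; have -> : [set v | f v = 1] = f @^-1` [set x | x = 1] by [].
by apply: preimage_closed; [move=> x _; exact: cf | exact: closed_eq].
Qed.

Lemma cont_sum (I : finType) (F : I -> 'rV[R]_(n * m) -> R) :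
  (forall i, continuous (F i)) -> continuous (fun v => \sum_i F i v).
Proof.
move=> h; apply: continuous_big => //; exact: add_continuous.
Qed.

Definition Dset : set 'rV[R]_(n * m) := [set v | rowstoch (vec_mx v : 'M[R]_(n,m))].

Lemma Dset_closed : closed Dset.
Proof.
have -> : Dset = (\bigcap_(p in [set: 'I_n * 'I_m])
                   [set v | 0 <= (vec_mx v : 'M[R]_(n,m)) p.1 p.2]) `&`
                 (\bigcap_(i in [set: 'I_n])
                   [set v | \sum_(j < m) (vec_mx v : 'M[R]_(n,m)) i j = 1]).
  apply/seteqP; split => v.
    by move=> [h1 h2]; split => [[i j] _ | i _]; [exact: h1 | exact: h2].
  by move=> [h1 h2]; split => [i j | i]; [exact: (h1 (i, j)) | exact: h2].
apply: closedI; apply: closed_bigI => p _.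
  apply: closed_ge0; under eq_fun do rewrite mxE; exact: coord_continuous.
apply: closed_eq1; apply: cont_sum => j.
under eq_fun do rewrite mxE; exact: coord_continuous.
Qed.

Lemma entry_le1 (P : 'M[R]_(n,m)) : rowstoch P -> forall i j, `|P i j| <= 1.
Proof.
move=> [h0 h1] i j; rewrite ger0_norm // -(h1 i) (bigD1 j) //= lerDl.
by apply: sumr_ge0 => k _.
Qed.

Lemma Dset_bounded : bounded_set Dset.
Proof.
rewrite /= /bounded_near; near=> M => v /= Hv.
apply: (@le_trans _ _ 1); last by near: M; apply: nbhs_pinfty_ge; rewrite num_real.
rewrite [leLHS]/Num.Def.normr /= mx_normrE; apply: bigmax_le => // -[i k] _ /=.
case/mxvec_indexP: k => a b.
have := entry_le1 Hv a b; by rewrite mxE ord1.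
Unshelve. all: by end_near.
Qed.

Lemma Dset_compact : compact Dset.
Proof. apply: bounded_closed_compact; [exact: Dset_bounded | exact: Dset_closed]. Qed.

Lemma exists_max (beta : R) (hm : (0 < m)%N) (K : 'M[R]_(n,m)) :
  exists P, rowstoch P /\ forall Q, rowstoch Q -> Fo beta K Q <= Fo beta K P.
Proof.
pose f (v : 'rV[R]_(n * m)) := Fo beta K (vec_mx v).
have ne : Dset !=set0.
  exists (mxvec (const_mx (m%:R^-1) : 'M[R]_(n,m))); rewrite /Dset /= mxvecK.
  split => [i j | i]; first by rewrite mxE invr_ge0.
  under eq_bigr do rewrite mxE.
  rewrite sumr_const card_ord -mulr_natl. field; by rewrite pnatr_eq0 -lt0n.
have cf : continuous f.
  rewrite /f /Fo; apply: cont_sum => i; apply: cont_sum => j.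
  have cc : continuous (fun v : 'rV[R]_(n * m) => (vec_mx v : 'M[R]_(n,m)) i j).
    under eq_fun do rewrite mxE; exact: coord_continuous.
  move=> x.
  apply: (@continuousB _ _ _ (fun v => K i j * (vec_mx v : 'M[R]_(n,m)) i j)
      (fun v => beta * (vec_mx v : 'M[R]_(n,m)) i j ^+ 2)).
    apply: (@continuousM _ _ (fun=> K i j) (fun v => (vec_mx v : 'M[R]_(n,m)) i j)).
      exact: cst_continuous.
    exact: cc.
  apply: (@continuousM _ _ (fun=> beta) (fun v => (vec_mx v : 'M[R]_(n,m)) i j ^+ 2)).
    exact: cst_continuous.
  apply: (@continuousM _ _ (fun v => (vec_mx v : 'M[R]_(n,m)) i j) (fun v => (vec_mx v : 'M[R]_(n,m)) i j)); exact: cc.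
have [c cD cmax] := compact_EVT_max ne Dset_compact (continuous_subspaceT cf).
exists (vec_mx c); split; first by move: cD; rewrite inE.
move=> Q HQ; have := cmax (mxvec Q); rewrite /f mxvecK; apply.
by rewrite inE /Dset /= mxvecK.
Qed.
End Ex.


Lemma sup_max (R : realType) (n m : nat) (beta : R) (K P0 : 'M[R]_(n,m)) :
  rowstoch P0 -> (forall Q, rowstoch Q -> Fo beta K Q <= Fo beta K P0) ->
  sup [set Fo beta K P | P in [set P | rowstoch P]] = Fo beta K P0.
Proof.
move=> H0 M0; apply/eqP; rewrite eq_le; apply/andP; split.
  apply: ge_sup; first by exists (Fo beta K P0), P0.
  by move=> x [P HP <-]; exact: M0.
apply: sup_upper_bound; last by exists P0.
split; first by exists (Fo beta K P0), P0.
by exists (Fo beta K P0) => x [P HP <-]; exact: M0.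
Qed.

Definition Lf (R : realType) (V : nat) (c : 'I_V -> R) (d : 'cV[R]_V) : R :=
  \sum_(v < V) d v 0 * c v.

Lemma Lf_lin (R : realType) (V : nat) (c : 'I_V -> R) : linear (Lf c).
Proof.
move=> a u w; rewrite /Lf scaler_sumr -big_split; apply: eq_bigr => v _.
by rewrite !mxE /= mulrDl -[a *: _]/(a * _) mulrA.
Qed.

HB.instance Definition _ (R : realType) (V : nat) (c : 'I_V -> R) :=
  GRing.isLinear.Build R 'cV[R]_V R *:%R (Lf c) (Lf_lin c).

Lemma Lf_cont (R : realType) (V : nat) (c : 'I_V -> R) : continuous (Lf c).
Proof.
rewrite /Lf; apply: continuous_big => //; first exact: add_continuous.
move=> v _ y.
apply: (@continuousM _ _ (fun d : 'cV[R]_V => d v 0) (fun=> c v)).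
  exact: coord_continuous.
exact: cst_continuous.
Qed.

Lemma diff_from (R : realType) (V : nat) (f : 'cV[R]_V -> R) (c : 'I_V -> R) x :
  f \o shift x = cst (f x) + Lf c +o_ (0 : 'cV[R]_V) id ->
  differentiable f x /\ 'd f x = Lf c :> (_ -> _).
Proof.
move=> h; have cL : continuous (Lf c) by exact: Lf_cont.
have e := diff_unique cL h; split => //.
apply/diff_locallyP; rewrite e; split => //.
Qed.

Section Main.
Variables (R : realType) (n m V : nat) (lam beta : R)
  (Z : 'I_V -> 'M[R]_(n, m)) (T : 'I_V -> 'M[R]_m) (H : 'M[R]_(n, m)).

Definition Am v : 'M[R]_(n, m) := Z v *m T v.
Definition Kof (a : 'cV[R]_V) : 'M[R]_(n, m) :=
  \matrix_(i, j) (lam * \sum_(v < V) (a v 0 ^+ 2 * Am v i j) - H i j).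

Lemma trE (P M : 'M[R]_(n, m)) : \tr (P^T *m M) = \sum_i \sum_j P i j * M i j.
Proof.
rewrite /mxtrace; under eq_bigr do rewrite !mxE.
rewrite exchange_big; apply: eq_bigr => i _; apply: eq_bigr => j _; by rewrite mxE.
Qed.

Lemma inner_objE a P : inner_obj lam beta Z T H a P = Fo beta (Kof a) P.
Proof.
rewrite /inner_obj /Fo /frob2.
have e : \sum_(v < V) a v 0 ^+ 2 * \tr (P^T *m Z v *m T v)
    = \sum_i \sum_j (\sum_(v < V) a v 0 ^+ 2 * Am v i j) * P i j.
  under eq_bigr do rewrite -mulmxA trE sum2M.
  rewrite exchange_big; apply: eq_bigr => i _; rewrite exchange_big.
  apply: eq_bigr => j _; rewrite mulr_suml; apply: eq_bigr => v _.
  rewrite /Am; ring.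
rewrite e !sum2M sum2N sum2D sum2N sum2D; apply: sum2_ext => i j.
rewrite !mxE; ring.
Qed.

Lemma hfunE a P : rowstoch P ->
  (forall Q, rowstoch Q -> Fo beta (Kof a) Q <= Fo beta (Kof a) P) ->
  hfun lam beta Z T H a = Fo beta (Kof a) P.
Proof.
move=> HP MP; rewrite /hfun.
rewrite (_ : inner_obj lam beta Z T H a = Fo beta (Kof a)); last first.
  by apply: funext => Q; exact: inner_objE.
exact: sup_max.
Qed.

End Main.

Section Key.
Variables (R : realType) (n m V : nat) (lam beta : R)
  (Z : 'I_V -> 'M[R]_(n, m)) (T : 'I_V -> 'M[R]_m) (H : 'M[R]_(n, m)).

Lemma entry_norm (d : 'cV[R]_V) v : `|d v 0| <= `|d|.
Proof.
rewrite [leRHS]/Num.Def.normr /= mx_normrE; apply/bigmax_geP; right => /=.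
by exists (v, 0).
Qed.

Definition cP (P0 : 'M[R]_(n, m)) (a : 'cV[R]_V) (v : 'I_V) : R :=
  2 * lam * a v 0 * \tr (P0^T *m Z v *m T v).

Lemma DKE (a d : 'cV[R]_V) i j :
  (Kof lam Z T H (d + a) - Kof lam Z T H a) i j
  = \sum_(v < V) lam * (d v 0 * (d v 0 + 2 * a v 0)) * Am Z T v i j.
Proof.
rewrite !mxE; under eq_bigr do rewrite mxE.
rewrite [RHS](eq_bigr (fun v => lam * ((d v 0 + a v 0) ^+ 2 * Am Z T v i j)
    - lam * (a v 0 ^+ 2 * Am Z T v i j))); last by move=> v _; ring.
rewrite sumrB -!mulr_sumr; ring.
Qed.

Lemma sE (a d : 'cV[R]_V) (P0 : 'M[R]_(n, m)) :
  dotm (Kof lam Z T H (d + a) - Kof lam Z T H a) P0 - Lf (cP P0 a) d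
  = \sum_i \sum_j \sum_(v < V) lam * d v 0 ^+ 2 * Am Z T v i j * P0 i j.
Proof.
have -> : Lf (cP P0 a) d = \sum_i \sum_j \sum_(v < V)
     d v 0 * (2 * lam * a v 0) * (P0 i j * Am Z T v i j).
  rewrite /Lf /cP.
  under eq_bigr do rewrite -mulmxA trE mulrA sum2M.
  rewrite exchange_big; apply: eq_bigr => i _; rewrite exchange_big.
  by apply: eq_bigr => j _; apply: eq_bigr => v _; rewrite /Am.
rewrite /dotm sum2N sum2D; apply: sum2_ext => i j.
rewrite DKE mulr_suml -sumrN -big_split; apply: eq_bigr => v _ /=; ring.
Qed.

End Key.

Section Key2.
Variables (R : realType) (n m V : nat) (lam beta : R)
  (Z : 'I_V -> 'M[R]_(n, m)) (T : 'I_V -> 'M[R]_m) (H : 'M[R]_(n, m)).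

Lemma key (hb : 0 < beta) (hl : 0 < lam) (hm : (0 < m)%N) (a : 'cV[R]_V)
  (P0 : 'M[R]_(n, m)) : rowstoch P0 ->
  (forall Q, rowstoch Q -> Fo beta (Kof lam Z T H a) Q <= Fo beta (Kof lam Z T H a) P0) ->
  exists C : R, forall d : 'cV[R]_V, `|d| <= 1 ->
    `|hfun lam beta Z T H (d + a) - hfun lam beta Z T H a - Lf (cP lam Z T P0 a) d|
    <= C * `|d| ^+ 2.
Proof.
move=> H0 M0.
pose S i j := \sum_(v < V) lam * (1 + 2 * `|a v 0|) * `|Am Z T v i j|.
pose C1 := \sum_i \sum_j \sum_(v < V) lam * `|Am Z T v i j| * `|P0 i j|.
pose C2 := \sum_i \sum_j S i j ^+ 2.
exists ((4 * beta)^-1 * C2 + C1) => d hd.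
set N := `|d|.
have N0 : 0 <= N by exact: normr_ge0.
have hdv : forall v, `|d v 0| <= N by move=> v; exact: entry_norm.
have [P1 [H1 M1]] := exists_max beta hm (Kof lam Z T H (d + a)).
rewrite (hfunE H1 M1) (hfunE H0 M0).
set K0 := Kof lam Z T H a; set K1 := Kof lam Z T H (d + a).
have low : Fo beta K0 P0 + dotm (K1 - K0) P0 <= Fo beta K1 P1.
  by rewrite -Fo_shift; apply: M1.
have up := @Fo_upper R n m beta hb K0 K1 P0 H0 M0 P1 H1.
have bs : `|dotm (K1 - K0) P0 - Lf (cP lam Z T P0 a) d| <= N ^+ 2 * C1.
  rewrite sE /C1 sum2M; apply: (le_trans (ler_norm_sum _ _ _)).
  apply: ler_sum => i _; apply: (le_trans (ler_norm_sum _ _ _)).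
  apply: ler_sum => j _; rewrite mulr_sumr; apply: (le_trans (ler_norm_sum _ _ _)).
  apply: ler_sum => v _.
  rewrite !normrM (gtr0_norm hl) -expr2.
  have h2 : `|d v 0| ^+ 2 <= N ^+ 2.
    by rewrite ler_pXn2r // ?nnegrE //; exact: hdv.
  have := normr_ge0 (Am Z T v i j); have := normr_ge0 (P0 i j).
  move=> p0 p1.
  have -> : N ^+ 2 * (lam * `|Am Z T v i j| * `|P0 i j|)
      = lam * N ^+ 2 * `|Am Z T v i j| * `|P0 i j| by ring.
  apply: ler_wpM2r => //; apply: ler_wpM2r => //; exact: (ler_wpM2l (ltW hl)).
have bfr : fr (K1 - K0) <= N ^+ 2 * C2.
  rewrite /C2 /fr sum2M; apply: sum2_le => i j.
  have hk : `|(K1 - K0) i j| <= N * S i j.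
    rewrite /K1 /K0 DKE /S mulr_sumr; apply: (le_trans (ler_norm_sum _ _ _)).
    apply: ler_sum => v _; rewrite !normrM (gtr0_norm hl).
    have e1 : `|d v 0 + 2 * a v 0| <= 1 + 2 * `|a v 0|.
      apply: (le_trans (ler_normD _ _)); rewrite normrM gtr0_norm //.
      by rewrite lerD2r; apply: le_trans hd; exact: hdv.
    have e2 : `|d v 0| * `|d v 0 + 2 * a v 0| <= N * (1 + 2 * `|a v 0|).
      by apply: ler_pM => //; exact: hdv.
    have := normr_ge0 (Am Z T v i j) => p0.
    have -> : N * (lam * (1 + 2 * `|a v 0|) * `|Am Z T v i j|)
       = lam * (N * (1 + 2 * `|a v 0|)) * `|Am Z T v i j| by ring.
    rewrite mulrA; apply: ler_wpM2r => //; rewrite -mulrA; exact: (ler_wpM2l (ltW hl)).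
  rewrite -real_normK ?num_real // -exprMn.
  by rewrite ler_pXn2r // ?nnegrE // (le_trans _ hk).
have b4 : 0 <= (4 * beta)^-1 by rewrite invr_ge0 mulr_ge0 // ltW.
have bfr' : (4 * beta)^-1 * fr (K1 - K0) <= (4 * beta)^-1 * (N ^+ 2 * C2).
  by rewrite ler_wpM2l.
set r := Fo beta K1 P1 - Fo beta K0 P0 - dotm (K1 - K0) P0.
set s := dotm (K1 - K0) P0 - Lf (cP lam Z T P0 a) d.
have -> : Fo beta K1 P1 - Fo beta K0 P0 - Lf (cP lam Z T P0 a) d = r + s.
  rewrite /r /s; ring.
have hr : `|r| <= (4 * beta)^-1 * (N ^+ 2 * C2).
  rewrite ger0_norm; last by rewrite /r; lra.
  rewrite /r; lra.
apply: (le_trans (ler_normD _ _)).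
have -> : ((4 * beta)^-1 * C2 + C1) * N ^+ 2
    = (4 * beta)^-1 * (N ^+ 2 * C2) + N ^+ 2 * C1 by ring.
exact: lerD.
Qed.

End Key2.

Lemma ismaxE (R : realType) (n m V : nat) (lam beta : R)
  (Z : 'I_V -> 'M[R]_(n, m)) (T : 'I_V -> 'M[R]_m) (H : 'M[R]_(n, m)) a P :
  is_maximizer lam beta Z T H a P <->
  rowstoch P /\ (forall Q, rowstoch Q ->
     Fo beta (Kof lam Z T H a) Q <= Fo beta (Kof lam Z T H a) P).
Proof.
split => -[h1 h2]; split => // Q hQ.
  rewrite -!inner_objE; exact: h2.
rewrite !inner_objE; exact: h2.
Qed.

Local Close Scope classical_set_scope.

Theorem theorem1 (R : realType) (n m V : nat) (lam beta : R)
  (Z : 'I_V -> 'M[R]_(n, m)) (T : 'I_V -> 'M[R]_m) (H : 'M[R]_(n, m))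
  (alpha : 'cV[R]_V) :
  (0 < n)%N -> (0 < m)%N -> (0 < V)%N -> 0 < lam -> 0 < beta ->
  (forall v, rowstoch (Z v)) ->
  (forall v, (T v)^T *m T v = 1%:M) ->
  (forall i j, 0 <= H i j) ->
  rowstoch (alpha^T) ->
  differentiable (hfun lam beta Z T H) alpha /\
  (exists! P, is_maximizer lam beta Z T H alpha P) /\
  (forall P, is_maximizer lam beta Z T H alpha P ->
     forall v : 'I_V,
       'D_(delta_mx v 0) (hfun lam beta Z T H) alpha
       = 2 * lam * alpha v 0 * \tr (P^T *m Z v *m T v)).
Proof.
move=> hn hm hV hl hb _ _ _ _.
have [P0 [H0 M0]] := exists_max beta hm (Kof lam Z T H alpha).
have [C hC] := key hb hl hm H0 M0.
set h := hfun lam beta Z T H.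
have ho : h \o shift alpha = cst (h alpha) + Lf (cP lam Z T P0 alpha)
    +o_ (0 : 'cV[R]_V) id.
  apply/eqaddoP => eps heps.
  have pe : 0 < eps / (`|C| + 1) by rewrite divr_gt0 // ltr_wpDl.
  near=> d.
  change (`|h (d + alpha) - (h alpha + Lf (cP lam Z T P0 alpha) d)| <= eps * `|d|).
  have hN1 : `|d| <= 1 by near: d; exact: (@nbhs0_le _ 'cV[R]_V _ ltr01).
  have hN2 : `|d| <= eps / (`|C| + 1).
    by near: d; exact: (@nbhs0_le _ 'cV[R]_V _ pe).
  have := hC d hN1; rewrite opprD addrA => hd.
  apply: (le_trans hd).
  have N0 := normr_ge0 d.
  have C0 := normr_ge0 C.
  have CC : C <= `|C| by exact: ler_norm.
  have h3 : (`|C| + 1) * `|d| <= eps.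
    by rewrite mulrC -ler_pdivlMr // ltr_wpDl.
  nra.
have [dh Dh] := diff_from ho.
split; first exact: dh.
split.
  exists P0; split; first by apply/ismaxE.
  move=> P /ismaxE [HP MP]; apply/esym; exact: (max_unique hb H0 M0 HP MP).
move=> P /ismaxE [HP MP] v.
have -> : P = P0 by exact: (max_unique hb H0 M0 HP MP).
rewrite deriveE // Dh /Lf (bigD1 v) //= mxE !eqxx mul1r big1 ?addr0 //.
move=> u /negbTE; rewrite mxE eq_sym => ->; by rewrite mul0r.
Unshelve. all: by end_near.
Qed.
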